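(* Under the model and standing assumption below, for every $n$, every admissible control $T^n\in\mathcal A^n$, and all $t\ge0$, one has $\hat W^n_t\ge\Gamma_1[\hat F^n](t)$.
   Context: Finite sets $\mathcal I$ (size $I$), $\mathcal K$ (size $K$), $\mathcal J\subset\mathcal I\times\mathcal K$ (size $J$); $\mathcal J_i=\{(i,k)\in\mathcal J\}$, $\mathcal J^k=\{(i,k)\in\mathcal J\}$. $\lambda_i,\mu_j\in(0,\infty)$; $R$ is $I\times J$ with $R_{ij}=\mu_j$ if $j\in\mathcal J_i$, else $0$; $G$ is $K\times J$ with $G_{kj}=1_{j\in\mathcal J^k}$. LP: minimize $\rho$ s.t. $R\xi=\lambda$, $G\xi\le\rho1_K$, $\xi\ge0$. Dual: maximize $y\cdot\lambda$ s.t. $\sum_kz_k=1$, $yR\le zG$, $z\ge0$. Standing assumption: LP optimal value $1$; every $\xi$ with $(\xi,1)$ optimal satisfies $(G\xi)_k=1$ for all $k$; the dual has a unique solution $(y^*,z^* )$. Model: rates $\lambda^n_i,\mu^n_j>0$ with $\hat\lambda^n_i:=n^{-1/2}(\lambda^n_i-n\lambda_i)\to\hat\lambda_i\in\mathbb R$, $\hat\mu^n_j:=n^{-1/2}(\mu^n_j-n\mu_j)\to\hat\mu_j\in\mathbb R$. Mutually independent renewal processes $\check A_i,\check S_j$ with right-continuous paths and IID strictly positive mean-1 interarrival times with finite squared coefficients of variation ($C^2_{A_i}>0$), and an independent random element $\Upsilon$ in a Polish space; $A^n_i(t)=\check A_i(\lambda^n_it)$, $S^n_j(t)=\check S_j(\mu^n_jt)$.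 An admissible control $T^n\in\mathcal A^n$ is a process $(T^n_j)_{j\in\mathcal J}$ with continuous nondecreasing $1$-Lipschitz paths, $T^n(0)=0$, such that with $D^n_j=S^n_j\circ T^n_j$, $X^n_i(t)=A^n_i(t)-\sum_{j\in\mathcal J_i}D^n_j(t)$, $I^n_k(t)=t-(GT^n(t))_k$, one has $X^n_i\ge0$, $I^n_k$ nondecreasing, and $T^n$ adapted to $\sigma\{A^n(s),D^n(s),s\le t;\Upsilon\}$. Define $\hat X^n=n^{-1/2}X^n$, $\hat W^n_t=y^*\cdot\hat X^n_t$, $\hat A^n_i(t)=n^{-1/2}(A^n_i(t)-\lambda^n_it)$, $\hat S^n_j(t)=n^{-1/2}(S^n_j(t)-\mu^n_jt)$, and $\hat F^n(t)=\sum_iy^*_i\big(\hat A^n_i(t)-\sum_{j\in\mathcal J_i}\hat S^n_j(T^n_j(t))+\hat\lambda^n_it-\sum_{j\in\mathcal J_i}\hat\mu^n_jT^n_j(t)\big)$. Skorohod map on the half line: for $\psi\in D_{\mathbb R}[0,\infty)$, $\Gamma_1[\psi](t)=\psi(t)+\sup_{0\le s\le t}\psi(s)^-$. *)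

(* Defs.v *)
From HB Require Import structures.
From mathcomp Require Import all_boot all_order all_algebra.
From mathcomp Require Import all_classical all_reals all_analysis.
Set Implicit Arguments. Unset Strict Implicit. Unset Printing Implicit Defensive.
Import Order.TTheory GRing.Theory Num.Theory.
Import numFieldNormedType.Exports.
Local Open Scope classical_set_scope.
Local Open Scope ring_scope.

(* Index sets.  I, K are finite types; the finite set J ⊂ I × K is encoded  *)
(* as a finite type J together with an injective map j |-> (jI j, jK j).    *)
(*   J_i = {j | jI j = i},   J^k = {j | jK j = k}.                          *)

Section LP.
Variables (R : realType) (I K J : finType) (jI : J -> I) (jK : J -> K).

Definition Rmat (mu : J -> R) (i : I) (j : J) : R := if jI j == i then mu j else 0.
Definition Gmat (k : K) (j : J) : R := if jK j == k then 1 else 0.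

Definition lp_feasible (lam : I -> R) (mu : J -> R) (xi : J -> R) (rho : R) : Prop :=
  (forall i, \sum_j Rmat mu i j * xi j = lam i) /\
  (forall k, \sum_j Gmat k j * xi j <= rho) /\
  (forall j, 0 <= xi j).

Definition lp_optimal lam mu xi rho : Prop :=
  lp_feasible lam mu xi rho /\
  forall xi' rho', lp_feasible lam mu xi' rho' -> rho <= rho'.

Definition dual_feasible (mu : J -> R) (y : I -> R) (z : K -> R) : Prop :=
  \sum_k z k = 1 /\
  (forall j, \sum_i y i * Rmat mu i j <= \sum_k z k * Gmat k j) /\
  (forall k, 0 <= z k).

Definition dual_optimal (lam : I -> R) (mu : J -> R) y z : Prop :=
  dual_feasible mu y z /\
  forall y' z', dual_feasible mu y' z' -> \sum_i y' i * lam i <= \sum_i y i * lam i.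

Definition standing_assumption (lam : I -> R) (mu : J -> R)
    (ystar : I -> R) (zstar : K -> R) : Prop :=
  (exists xi, lp_optimal lam mu xi 1) /\
  (forall xi, lp_optimal lam mu xi 1 -> forall k, \sum_j Gmat k j * xi j = 1) /\
  dual_optimal lam mu ystar zstar /\
  (forall y z, dual_optimal lam mu y z -> y = ystar /\ z = zstar).

End LP.

(* N is the (right-continuous) renewal counting path with interarrival      *)
(* times u_0, u_1, ... :  N(t) = #{k >= 1 : u_0 + ... + u_{k-1} <= t}.      *)
Definition renewal_path (R : realType) (u : nat -> R) (N : R -> nat) : Prop :=
  forall t, 0 <= t -> forall k : nat, (k <= N t)%N <-> \sum_(l < k) u l <= t.

Definition events_of d (Omega : measurableType d) d' (U : measurableType d')
    (X : Omega -> U) : set (set Omega) :=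
  [set A | exists2 B, measurable B & A = X @^-1` B].

Definition mutually_independent d (Omega : measurableType d) (R : realType)
    (P : probability Omega R) (iota : eqType) (E : iota -> set (set Omega)) : Prop :=
  forall (s : seq iota) (A : iota -> set Omega),
    uniq s -> (forall i, i \in s -> E i (A i)) ->
    P (\big[setI/setT]_(i <- s) A i) = (\prod_(i <- s) P (A i))%E.

Definition iid_interarrivals d (Omega : measurableType d) (R : realType)
    (P : probability Omega R) (u : nat -> Omega -> R) : Prop :=
  (forall l, measurable_fun setT (u l)) /\
  (forall l w, 0 < u l w) /\
  (forall l B, measurable B -> P (u l @^-1` B) = P (u 0%N @^-1` B)) /\
  ('E_P[u 0%N] = 1%:E)%E /\
  u 0%N \in Lfun P 2%:E.

Section Model.
Variables (R : realType) (I K J : finType) (jI : J -> I) (jK : J -> K).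

Definition rsq (n : nat) : R := (Num.sqrt (n%:R : R))^-1.

Definition An (checkA : I -> R -> nat) (lamn : I -> R) (i : I) (t : R) : R :=
  (checkA i (lamn i * t))%:R.
Definition Sn (checkS : J -> R -> nat) (mun : J -> R) (j : J) (t : R) : R :=
  (checkS j (mun j * t))%:R.
Definition Dn checkS mun (T : J -> R -> R) (j : J) (t : R) : R :=
  Sn checkS mun j (T j t).
Definition Xn checkA lamn checkS mun T (i : I) (t : R) : R :=
  An checkA lamn i t - \sum_(j | jI j == i) Dn checkS mun T j t.
Definition Idle (T : J -> R -> R) (k : K) (t : R) : R :=
  t - \sum_j Gmat R jK k j * T j t.

Definition What (n : nat) (ystar : I -> R) checkA lamn checkS mun T (t : R) : R :=
  \sum_i ystar i * (rsq n * Xn checkA lamn checkS mun T i t).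

Definition Ahat (n : nat) checkA lamn (i : I) (t : R) : R :=
  rsq n * (An checkA lamn i t - lamn i * t).
Definition Shat (n : nat) checkS mun (j : J) (t : R) : R :=
  rsq n * (Sn checkS mun j t - mun j * t).
Definition lamhat (n : nat) (lam lamn : I -> R) (i : I) : R :=
  rsq n * (lamn i - n%:R * lam i).
Definition muhat (n : nat) (mu mun : J -> R) (j : J) : R :=
  rsq n * (mun j - n%:R * mu j).

Definition Fhat (n : nat) (ystar : I -> R) (lam : I -> R) (mu : J -> R)
    checkA lamn checkS mun (T : J -> R -> R) (t : R) : R :=
  \sum_i ystar i *
    (Ahat n checkA lamn i t
     - \sum_(j | jI j == i) Shat n checkS mun j (T j t)
     + lamhat n lam lamn i * t
     - \sum_(j | jI j == i) muhat n mu mun j * T j t).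

End Model.

(* (real supremum; the set is bounded for paths in D[0,oo)).                *)
Definition Gamma1 (R : realType) (psi : R -> R) (t : R) : R :=
  psi t + sup [set Num.max (- psi s) 0 | s in [set s : R | 0 <= s <= t]].

Definition gen_events (R : realType) (I J : finType) d (Omega : measurableType d)
    d' (U : measurableType d')
    (A : I -> Omega -> R -> R) (D : J -> Omega -> R -> R) (Ups : Omega -> U)
    (t : R) : set (set Omega) :=
  [set E | (exists i s, 0 <= s <= t /\ events_of (fun w => A i w s) E) \/
           (exists j s, 0 <= s <= t /\ events_of (fun w => D j w s) E) \/
           events_of Ups E].

Definition admissible (R : realType) (I K J : finType) (jI : J -> I) (jK : J -> K)
    d (Omega : measurableType d) d' (U : measurableType d')
    (checkA : I -> Omega -> R -> nat) (checkS : J -> Omega -> R -> nat)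
    (Ups : Omega -> U) (lamn : I -> R) (mun : J -> R)
    (T : J -> Omega -> R -> R) : Prop :=
  let Tw w := fun j => T j w in
  (forall w j, T j w 0 = 0) /\
  (forall w j, {within [set t : R | 0 <= t], continuous (T j w)}) /\
  (forall w j s t, 0 <= s <= t -> T j w s <= T j w t) /\
  (forall w j s t, 0 <= s -> 0 <= t -> `|T j w t - T j w s| <= `|t - s|) /\
  (forall w i t, 0 <= t ->
     0 <= Xn jI (fun i => checkA i w) lamn (fun j => checkS j w) mun (Tw w) i t) /\
  (forall w k s t, 0 <= s <= t -> Idle jK (Tw w) k s <= Idle jK (Tw w) k t) /\
  (forall j t, 0 <= t -> forall B : set R, measurable B ->
     <<s gen_events
           (fun i w s => An (fun i => checkA i w) lamn i s)
           (fun j w s => Dn (fun j => checkS j w) mun (Tw w) j s)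
           Ups t >> ((fun w => T j w t) @^-1` B)).

(* Main.v *)
Require Import Defs.
From HB Require Import structures.
From mathcomp Require Import all_boot all_order all_algebra.
From mathcomp Require Import all_classical all_reals all_analysis.
From mathcomp Require Import ring lra.
Import Order.TTheory GRing.Theory Num.Theory.
Import numFieldNormedType.Exports.
Local Open Scope classical_set_scope.
Local Open Scope ring_scope.

Section FMsec.
Set Implicit Arguments. Unset Strict Implicit.
Variable R : realType.

Lemma sum_ind1 (T : finType) (p : T) (f : T -> R) :
  \sum_(c : T) (c == p)%:R * f c = f p.
Proof.
rewrite (bigD1 p) //= eqxx mul1r big1 ?addr0 // => c /negbTE ->; by rewrite mul0r.
Qed.

Lemma sum_ind2 (T : finType) (p q : T) (al be : R) (g : T -> R) :
  \sum_c (al * (c == p)%:R + be * (c == q)%:R) * g c = al * g p + be * g q.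
Proof.
rewrite -(sum_ind1 p g) -(sum_ind1 q g) !mulr_sumr -big_split /=.
by apply: eq_bigr => c _; ring.
Qed.

Lemma sum_lift (C C' : finType) (m' : C' -> R) (K : C' -> C -> R) (f : C -> R) :
  \sum_c (\sum_c' m' c' * K c' c) * f c = \sum_c' m' c' * (\sum_c K c' c * f c).
Proof.
under eq_bigr do rewrite mulr_suml.
rewrite exchange_big /=; apply: eq_bigr => c' _.
rewrite mulr_sumr; apply: eq_bigr => c _; by rewrite mulrA.
Qed.

Lemma exists_t (C : finType) (al r : C -> R) :
  (forall p q, 0 < al p -> al q < 0 -> 0 <= (- al q) * r p + al p * r q) ->
  (forall c, al c = 0 -> 0 <= r c) ->
  exists t, forall c, al c * t <= r c.
Proof.
move=> Hpq H0.
pose M := \sum_c `|r c / al c|.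
pose t := \big[Order.min/M]_(p | 0 < al p) (r p / al p).
exists t => c.
have [Hc|Hc|Hc] := ltgtP (al c) 0.
- have Hle : r c / al c <= t.
    rewrite /t; elim/big_rec: _ => [|p x Pp Hx].
    + rewrite /M (bigD1 c) //=; apply: le_trans (ler_norm _) _.
      by rewrite lerDl sumr_ge0.
    + rewrite le_min Hx andbT.
      have := Hpq p c Pp Hc.
      set u := r c / al c; set v := r p / al p.
      have Eu : r c = u * al c by rewrite /u divfK // lt_eqF.
      have Ev : r p = v * al p by rewrite /v divfK // gt_eqF.
      rewrite Eu Ev => H.
      have h : 0 < al p * (- al c) by rewrite mulr_gt0 // oppr_gt0.
      nra.
  have -> : r c = al c * (r c / al c) by rewrite mulrC divfK // lt_eqF.
  by rewrite ler_nM2l.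
- have Hle : t <= r c / al c.
    rewrite /t (bigD1 c) //= ge_min lexx //.
  have -> : r c = al c * (r c / al c) by rewrite mulrC divfK // gt_eqF.
  by rewrite ler_pM2l.
- by rewrite Hc mul0r; apply: H0.
Qed.

Lemma FM n : forall (C : finType) (a : C -> nat -> R) (b : C -> R),
  ~ (exists x : nat -> R, forall c, \sum_(v < n) a c v * x v <= b c) ->
  exists m : C -> R, (forall c, 0 <= m c) /\
    (forall v, (v < n)%N -> \sum_c m c * a c v = 0) /\ \sum_c m c * b c < 0.
Proof.
elim: n => [|n IH] C a b Hinf.
- have [c Hc]: exists c, b c < 0.
    apply: contrapT => Hn; apply: Hinf; exists (fun _ => 0) => c.
    rewrite big_ord0 leNgt; apply/negP => Hc; apply: Hn; by exists c.
  exists (fun c' => (c' == c)%:R); split; first by move=> c'; rewrite ler0n.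
  split; first by [].
  by rewrite sum_ind1.
- pose al c := a c n.
  pose K (c' : ((C * C) + C)%type) (c : C) : R := match c' with
     | inl (p, q) => if (0 < al p) && (al q < 0)
                     then (- al q) * (c == p)%:R + al p * (c == q)%:R else 0
     | inr c0 => if al c0 == 0 then (c == c0)%:R else 0 end.
  pose a' c' v := \sum_c K c' c * a c v.
  pose b' c' := \sum_c K c' c * b c.
  have K0 : forall c' c, 0 <= K c' c.
    move=> [[p q]|c0] c /=; case: ifP => // /andP [Hp Hq].
    by rewrite addr_ge0 // mulr_ge0 // ?ler0n // ?oppr_ge0 ltW.
  have a'n : forall c', a' c' n = 0.
    move=> [[p q]|c0]; rewrite /a' /K /=.
    + case: ((0 < al p) && (al q < 0)) => /=.
      * rewrite sum_ind2 /al; ring.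
      * by rewrite big1 // => c _; rewrite mul0r.
    + case E: (al c0 == 0) => /=.
      * by rewrite sum_ind1; apply/eqP.
      * by rewrite big1 // => c _; rewrite mul0r.
  have [|m' [Hm'0 [Hm'v Hm'b]]] := IH _ a' b'.
  + move=> [x Hx]; apply: Hinf.
    pose s c := \sum_(v < n) a c v * x v.
    have Hx' : forall c', \sum_c K c' c * s c <= \sum_c K c' c * b c.
      move=> c'; have := Hx c'; rewrite /a' /b' /s.
      by rewrite (sum_lift (fun c => K c' c) (fun c (v : 'I_n) => a c v) (fun v : 'I_n => x v)).
    have [t Ht] : exists t, forall c, al c * t <= b c - s c.
      apply: (exists_t (C := C) (al := al) (r := fun c => b c - s c)).
      * move=> p q Hp Hq; have := Hx' (inl (p, q)).
        rewrite /= Hp Hq /= !sum_ind2; nra.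
      * move=> c Hc; have := Hx' (inr c).
        rewrite /= Hc eqxx !sum_ind1; lra.
    * exists (fun v => if v == n then t else x v) => c.
      rewrite big_ord_recr /= eqxx.
      have -> : \sum_(i < n) a c i * (if (i == n :> nat) then t else x i) = s c.
        by apply: eq_bigr => i _; rewrite ltn_eqF.
      have := Ht c; rewrite /al; lra.
  + exists (fun c => \sum_c' m' c' * K c' c); split.
      by move=> c; apply: sumr_ge0 => c' _; apply: mulr_ge0.
    split.
    * move=> v; rewrite ltnS leq_eqVlt => /orP [/eqP ->|Hv];
        rewrite (sum_lift m' K (fun c => a c _)).
      - by rewrite big1 // => c' _; rewrite -/(a' c' n) a'n mulr0.
      - exact: Hm'v.
    * by rewrite (sum_lift m' K b).
Qed.

Lemma farkas (V C : finType) (u0 : V) (a : C -> V -> R) (b : C -> R) :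
  ~ (exists x : V -> R, forall c, \sum_u a c u * x u <= b c) ->
  exists m : C -> R, (forall c, 0 <= m c) /\ (forall u, \sum_c m c * a c u = 0) /\ \sum_c m c * b c < 0.
Proof.
move=> Hinf.
pose e := enum V.
have sumE : forall f : V -> R, \sum_u f u = \sum_(v < #|V|) f (nth u0 e v).
  by move=> f; rewrite -big_enum (big_nth u0) big_mkord cardE.
have Hi : ~ (exists x : nat -> R, forall c, \sum_(v < #|V|) a c (nth u0 e v) * x v <= b c).
  move=> [x Hx]; apply: Hinf; exists (fun u => x (index u e)) => c.
  rewrite sumE; apply: le_trans _ (Hx c); rewrite le_eqVlt; apply/orP; left; apply/eqP.
  apply: eq_bigr => v _; rewrite index_uniq ?enum_uniq // -cardE //.
have [m [Hm0 [Hmv Hmb]]] := @FM #|V| C (fun c v => a c (nth u0 e v)) b Hi.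
exists m; split => //; split => // u.
have Hu : u \in e by rewrite mem_enum.
rewrite -(nth_index u0 Hu); apply: Hmv.
by rewrite cardE index_mem.
Qed.
End FMsec.

Section LP2.
Set Implicit Arguments. Unset Strict Implicit.
Variables (R : realType) (I K J : finType) (jI : J -> I) (jK : J -> K).

Lemma sum_sel (T : finType) (x0 : T) (f : T -> R) :
  \sum_i (if x0 == i then f i else 0) = f x0.
Proof.
rewrite (bigD1 x0) //= eqxx big1 ?addr0 // => i Hi.
by rewrite eq_sym (negbTE Hi).
Qed.

Lemma sumR (y : I -> R) (mu : J -> R) j :
  \sum_i y i * Rmat jI mu i j = y (jI j) * mu j.
Proof.
rewrite -(sum_sel (jI j) (fun i => y i * mu j)); apply: eq_bigr => i _.
by rewrite /Rmat; case: ifP => _; [done | rewrite mulr0].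
Qed.

Lemma sumG (z : K -> R) j : \sum_k z k * Gmat R jK k j = z (jK j).
Proof.
rewrite -(sum_sel (jK j) z); apply: eq_bigr => k _.
by rewrite /Gmat; case: ifP => _; [rewrite mulr1 | rewrite mulr0].
Qed.

Lemma ystar_ge0 (lam : I -> R) (mu : J -> R) (ystar : I -> R) (zstar : K -> R) : (forall i, 0 < lam i) ->
  dual_optimal jI jK lam mu ystar zstar -> forall i, 0 <= ystar i.
Proof.
move=> Hlam [[Hz1 [Hzy Hz0]] Hopt] i0.
rewrite leNgt; apply/negP => Hneg.
pose y' i := if i == i0 then 0 else ystar i.
have Hf : dual_feasible jI jK mu y' zstar.
  split => //; split => // j.
  rewrite sumR sumG /y'; case: ifP => _; first by rewrite mul0r.
  by rewrite -(sumR ystar) -sumG; apply: Hzy.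
have := Hopt _ _ Hf.
rewrite (bigD1 i0) //= [X in _ <= X](bigD1 i0) //= /y' eqxx mul0r add0r.
rewrite (eq_bigr (fun i => ystar i * lam i)); last by move=> i /negbTE ->.
have := Hlam i0; nra.
Qed.

Lemma sum_div (T : finType) (f g : T -> R) (c : R) :
  \sum_i (f i / c) * g i = (\sum_i f i * g i) / c.
Proof. rewrite mulr_suml; apply: eq_bigr => i _; by rewrite mulrAC. Qed.

Lemma sum_unit (f : unit -> R) : \sum_t f t = f tt.
Proof. by rewrite (bigD1 tt) //= big1 ?addr0 // => -[]; rewrite eqxx. Qed.

Lemma E0 (T : finType) (f : T -> R) : \sum_i f i * 0 = 0.
Proof. by rewrite big1 // => i _; rewrite mulr0. Qed.

Lemma dual_ge1 (lam : I -> R) (mu : J -> R) (ystar : I -> R) (zstar : K -> R) :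
  standing_assumption jI jK lam mu ystar zstar -> 1 <= \sum_i ystar i * lam i.
Proof.
move=> [[xs [Hxf Hxo]] [_ [[Hyf Hopt] _]]].
rewrite leNgt; apply/negP => Hs.
set s := \sum_i ystar i * lam i in Hs.
pose V := (J + unit)%type.
pose C := (((I + I) + (K + J)) + unit)%type.
pose a (c : C) (u : V) : R := match c, u with
  | inl (inl (inl i)), inl j => Rmat jI mu i j
  | inl (inl (inr i)), inl j => - Rmat jI mu i j
  | inl (inr (inl k)), inl j => Gmat R jK k j
  | inl (inr (inl k)), inr _ => -1
  | inl (inr (inr j0)), inl j => - (j == j0)%:R
  | inr _, inr _ => 1
  | _, _ => 0 end.
pose b (c : C) : R := match c with
  | inl (inl (inl i)) => lam i
  | inl (inl (inr i)) => - lam i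
  | inl (inr _) => 0
  | inr _ => s end.
have sumV : forall f : V -> R, \sum_u f u = \sum_j f (inl j) + f (inr tt).
  by move=> f; rewrite big_sumType /= sum_unit.
have Hinf : ~ (exists x : V -> R, forall c, \sum_u a c u * x u <= b c).
  move=> [x Hx].
  pose xi j := x (inl j); pose rho := x (inr tt).
  have Hfeas : lp_feasible jI jK lam mu xi rho.
    split; [|split].
    - move=> i; apply/eqP; rewrite eq_le; apply/andP; split.
      + by have := Hx (inl (inl (inl i))); rewrite sumV /= mul0r addr0.
      + have := Hx (inl (inl (inr i))); rewrite sumV /= mul0r addr0.
        under eq_bigr do rewrite mulNr.
        by rewrite sumrN lerN2.
    - move=> k; have := Hx (inl (inr (inl k))); rewrite sumV /= mulN1r.
      rewrite /rho; lra.
    - move=> j; have := Hx (inl (inr (inr j))); rewrite sumV /= mul0r addr0.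
      under eq_bigr do rewrite mulNr.
      rewrite sumrN sum_ind1 /xi; lra.
  have := Hx (inr tt); rewrite sumV /= big1 ?mul1r ?add0r => [Hr|j _]; last by rewrite mul0r.
  have := Hxo xi rho Hfeas; rewrite /rho in Hr *; lra.
have [m [Hm0 [Hmu Hmb]]] := farkas (inr tt : V) Hinf.
pose p i := m (inl (inl (inl i))).
pose q i := m (inl (inl (inr i))).
pose z k := m (inl (inr (inl k))).
pose v j := m (inl (inr (inr j))).
pose sg := m (inr tt).
have sumC : forall f : C -> R, \sum_c f c =
   (\sum_i f (inl (inl (inl i))) + \sum_i f (inl (inl (inr i)))) +
   (\sum_k f (inl (inr (inl k))) + \sum_j f (inl (inr (inr j)))) + f (inr tt).
  by move=> f; rewrite !big_sumType /= sum_unit.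
pose y i := q i - p i.
have Hdual : forall j, \sum_i y i * Rmat jI mu i j <= \sum_k z k * Gmat R jK k j.
  move=> j; have := Hmu (inl j); rewrite sumC /=.
  have e1 : \sum_i m (inl (inl (inr i))) * - Rmat jI mu i j = - (q (jI j) * mu j).
    by rewrite -(sumR q) -sumrN; apply: eq_bigr => i _; rewrite mulrN.
  have e2 : \sum_j0 m (inl (inr (inr j0))) * - (j == j0)%:R = - v j.
    rewrite -(sum_ind1 j v) -sumrN; apply: eq_bigr => j0 _.
    by rewrite eq_sym /v mulrN mulrC.
  rewrite e1 e2 !sumR !sumG mulr0 addr0 /y /= mulrBl.
  have := Hm0 (inl (inr (inr j))); rewrite /p /q /z /v; lra.
have Hsg : \sum_k z k = sg.
  have := Hmu (inr tt); rewrite sumC /= !E0 mulr1.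
  under eq_bigr do rewrite mulrN1.
  rewrite sumrN /sg; lra.
have Hb : \sum_i y i * lam i > sg * s.
  have := Hmb; rewrite sumC /= !E0.
  have e1 : \sum_i m (inl (inl (inr i))) * - lam i = - \sum_i q i * lam i.
    by rewrite -sumrN; apply: eq_bigr => i _; rewrite mulrN.
  have e3 : \sum_i y i * lam i = \sum_i q i * lam i - \sum_i p i * lam i.
    by rewrite -sumrB; apply: eq_bigr => i _; rewrite /y mulrBl.
  rewrite e1 e3 /p /sg; lra.
have Hz0 : forall k, 0 <= z k by move=> k; apply: Hm0.
have Hle : \sum_i y i * lam i <= sg.
  have -> : \sum_i y i * lam i = \sum_j (\sum_i y i * Rmat jI mu i j) * xs j.
    rewrite (sum_lift y (Rmat jI mu) xs); apply: eq_bigr => i _.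
    by rewrite Hxf.1.
  apply: (@le_trans _ _ (\sum_j (\sum_k z k * Gmat R jK k j) * xs j)).
    apply: ler_sum => j _; apply: ler_wpM2r; [exact: Hxf.2.2 | exact: Hdual].
  rewrite (sum_lift z (Gmat R jK) xs) -Hsg.
  apply: ler_sum => k _; rewrite -[X in _ <= X]mulr1.
  apply: ler_wpM2l; [exact: Hz0 | exact: Hxf.2.1].
have sg_gt0 : 0 < sg.
  have [E|sgne] := eqVneq sg 0.
    by move: Hb Hle; rewrite E mul0r; lra.
  by rewrite lt_neqAle eq_sym sgne; apply: Hm0.
have Hf : dual_feasible jI jK mu (fun i => y i / sg) (fun k => z k / sg).
  split; [|split].
  - by rewrite -mulr_suml Hsg divff // gt_eqF.
  - move=> j; rewrite sumR sumG mulrAC ler_pM2r ?invr_gt0 //.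
    by have := Hdual j; rewrite sumR sumG.
  - by move=> k; rewrite divr_ge0 // ltW.
have := Hopt _ _ Hf; rewrite -/s sum_div ler_pdivrMr //.
lra.
Qed.

End LP2.

Theorem lemma4p1
  (R : realType) (I K J : finType) (jI : J -> I) (jK : J -> K)
  (* J ⊂ I × K *)
  (HJ : injective (fun j => (jI j, jK j)))
  (lam : I -> R) (mu : J -> R)
  (Hlam : forall i, 0 < lam i) (Hmu : forall j, 0 < mu j)
  (ystar : I -> R) (zstar : K -> R)
  (Hstand : standing_assumption jI jK lam mu ystar zstar)
  (* rates of the n-th system and their second-order behaviour *)
  (lamn : nat -> I -> R) (mun : nat -> J -> R)
  (Hlamn : forall n i, 0 < lamn n i) (Hmun : forall n j, 0 < mun n j)
  (lamhat_lim : I -> R) (muhat_lim : J -> R)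
  (Hlamhat : forall i, (fun n => lamhat n lam (lamn n) i) @ \oo --> lamhat_lim i)
  (Hmuhat : forall j, (fun n => muhat n mu (mun n) j) @ \oo --> muhat_lim j)
  (* probability space and primitives *)
  (d : measure_display) (Omega : measurableType d) (P : probability Omega R)
  (uA : I -> nat -> Omega -> R) (uS : J -> nat -> Omega -> R)
  (d' : measure_display) (U : measurableType d') (Ups : Omega -> U)
  (HUps : measurable_fun setT Ups)
  (HuA : forall i, iid_interarrivals P (uA i))
  (HuS : forall j, iid_interarrivals P (uS j))
  (HCA : forall i, (0 < 'V_P[uA i 0%N])%E)
  (Hindep : mutually_independent P
     (fun x : ((I * nat) + (J * nat)) + unit =>
        match x with
        | inl (inl (i, l)) => events_of (uA i l)
        | inl (inr (j, l)) => events_of (uS j l)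
        | inr _ => events_of Ups
        end))
  (checkA : I -> Omega -> R -> nat) (checkS : J -> Omega -> R -> nat)
  (HcheckA : forall i w, renewal_path (fun l => uA i l w) (checkA i w))
  (HcheckS : forall j w, renewal_path (fun l => uS j l w) (checkS j w)) :
  forall (n : nat), (0 < n)%N ->
  forall T : J -> Omega -> R -> R,
    admissible jI jK checkA checkS Ups (lamn n) (mun n) T ->
  forall (w : Omega) (t : R), 0 <= t ->
    Gamma1 (Fhat jI n ystar lam mu (fun i => checkA i w) (lamn n)
                 (fun j => checkS j w) (mun n) (fun j => T j w)) t
    <= What jI n ystar (fun i => checkA i w) (lamn n)
                 (fun j => checkS j w) (mun n) (fun j => T j w) t.
Proof.
  move=> n Hn T [HT0 [_ [Hmono [_ [HX [HIdle _]]]]]] w t Ht.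
  have Hdo := Hstand.2.2.1.
  have [Hz1 [Hzy Hz0]] := Hdo.1.
  have Hy0 := ystar_ge0 Hlam Hdo.
  have Hyl := dual_ge1 Hstand.
  set y := ystar.
  pose Tw := fun j => T j w.
  pose W := What jI n ystar (fun i => checkA i w) (lamn n) (fun j => checkS j w) (mun n) Tw.
  pose F := Fhat jI n ystar lam mu (fun i => checkA i w) (lamn n) (fun j => checkS j w) (mun n) Tw.
  pose c := rsq R n * n%:R.
  pose D s := \sum_i y i * (lam i * s - \sum_(j | jI j == i) mu j * Tw j s).
  have HWF : forall s, W s - F s = c * D s.
    move=> s; rewrite /W /F /What /Fhat -sumrB /D mulr_sumr; apply: eq_bigr => i _.
    rewrite -mulrBr mulrCA; congr (_ * _).
    rewrite /Xn /Ahat /lamhat /Shat /muhat /Dn.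
    have e1 : \sum_(j | jI j == i) rsq R n * (Sn (checkS^~ w) (mun n) j (Tw j s) - mun n j * Tw j s)
      = rsq R n * \sum_(j | jI j == i) Sn (checkS^~ w) (mun n) j (Tw j s) - rsq R n * \sum_(j | jI j == i) mun n j * Tw j s.
      by rewrite !mulr_sumr -sumrB; apply: eq_bigr => j _; rewrite mulrBr.
    have e2 : \sum_(j | jI j == i) rsq R n * (mun n j - n%:R * mu j) * Tw j s = rsq R n * \sum_(j | jI j == i) mun n j * Tw j s - c * \sum_(j | jI j == i) mu j * Tw j s.
      rewrite !mulr_sumr -sumrB; apply: eq_bigr => j _; rewrite /c; ring.
    rewrite e1 e2 /c; ring.
  pose E s := (\sum_i y i * lam i - 1) * s + \sum_j (zstar (jK j) - y (jI j) * mu j) * Tw j s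
     + \sum_k zstar k * Idle jK Tw k s.
  have HDE : forall s, D s = E s.
    move=> s.
    have e0 : D s = (\sum_i y i * lam i) * s - \sum_i y i * \sum_(j | jI j == i) mu j * Tw j s.
      by rewrite /D mulr_suml -sumrB; apply: eq_bigr => i _; rewrite mulrBr mulrA.
    have e1 : \sum_i y i * \sum_(j | jI j == i) mu j * Tw j s = \sum_j y (jI j) * (mu j * Tw j s).
      rewrite (partition_big jI predT) //=; apply: eq_bigr => i _.
      rewrite mulr_sumr; apply: eq_bigr => j /eqP <-. done.
    have e2 : \sum_k zstar k * Idle jK Tw k s = s - \sum_j zstar (jK j) * Tw j s.
      rewrite /Idle.
      under eq_bigr do rewrite mulrBr.
      rewrite sumrB -mulr_suml Hz1 mul1r; congr (_ - _).
      rewrite -(sum_lift zstar (Gmat R jK) (fun j => Tw j s)); apply: eq_bigr => j _.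
      by rewrite sumG.
    have e3 : \sum_j (zstar (jK j) - y (jI j) * mu j) * Tw j s = \sum_j zstar (jK j) * Tw j s - \sum_j y (jI j) * (mu j * Tw j s).
      by rewrite -sumrB; apply: eq_bigr => j _; rewrite mulrBl mulrA.
    rewrite e0 /E e3 e1 e2; ring.
  have Emono : forall s1 s2, 0 <= s1 <= s2 -> E s1 <= E s2.
    move=> s1 s2 Hs12; have /andP [Hs1 H12] := Hs12.
    rewrite /E; apply: lerD; [apply: lerD|].
    - by apply: ler_wpM2l => //; rewrite subr_ge0.
    - apply: ler_sum => j _; apply: ler_wpM2l.
        by have := Hzy j; rewrite sumR sumG subr_ge0.
      exact: Hmono.
    - apply: ler_sum => k _; apply: ler_wpM2l; [exact: Hz0 | exact: HIdle].
  have HI0 : forall k, Idle jK Tw k 0 = 0.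
    by move=> k; rewrite /Idle big1 ?subr0 // => j _; rewrite /Tw HT0 mulr0.
  have E0 : E 0 = 0.
    rewrite /E mulr0 add0r !big1 ?addr0 // => [k _|j _]; first by rewrite HI0 mulr0.
    by rewrite /Tw HT0 mulr0.
  have Hc : 0 <= c by rewrite /c mulr_ge0 // ?ler0n // /rsq invr_ge0 sqrtr_ge0.
  have HW0 : forall s, 0 <= s -> 0 <= W s.
    move=> s Hs; rewrite /W /What; apply: sumr_ge0 => i _.
    rewrite mulr_ge0 // mulr_ge0 //; last exact: HX.
    by rewrite /rsq invr_ge0 sqrtr_ge0.
  have HDt : 0 <= D t.
    by rewrite HDE; have := Emono 0 t; rewrite E0; apply; apply/andP; split.
  change (Gamma1 F t <= W t).
  have Hsup : sup [set Num.max (- F s) 0 | s in [set s : R | 0 <= s <= t]] <= c * D t.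
    apply: ge_sup.
      by exists (Num.max (- F 0) 0); exists 0 => //; apply/andP; split.
    move=> x [s /andP [Hs0 Hst] <-]; rewrite ge_max; apply/andP; split.
    + have HDs : D s <= D t by rewrite !HDE; apply: Emono; apply/andP; split.
      have := HWF s; have := HW0 s Hs0; have : c * D s <= c * D t by apply: ler_wpM2l.
      lra.
    + exact: mulr_ge0.
  rewrite /Gamma1; have := HWF t; lra.
Qed.
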